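(* For $\tau>-1$, the function $r\mapsto\frac{h_u'(r)}{r}$ is increasing on $(0,j_\tau)$, where $h_u(r):=r\frac{J_{\tau+1}(r)}{J_\tau(r)}$.
   Context: $J_\tau$ denotes the Bessel function of the first kind of order $\tau$ and $j_\tau$ its first positive zero. *)

(* Defs.v *)
From Stdlib Require Import Reals Lra ClassicalEpsilon Arith Factorial.
Open Scope R_scope.

(* The limit of a real sequence (a chosen limit if it converges; arbitrary otherwise). *)
Definition Rlim (u : nat -> R) : R :=
  epsilon (inhabits 0) (fun l => Un_cv u l).

(* Euler's Gamma function via the Gauss product formula (valid for x > 0):
   Gamma x = lim_n n! n^x / (x (x+1) ... (x+n)). *)
Definition Gamma (x : R) : R :=
  Rlim (fun n => INR (fact n) * Rpower (INR n) x / prod_f_R0 (fun k => x + INR k) n).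

Definition BesselJ (tau r : R) : R :=
  Rlim (fun N => sum_f_R0 (fun m =>
          (-1) ^ m / (INR (fact m) * Gamma (INR m + tau + 1))
          * Rpower (r / 2) (2 * INR m + tau)) N).

Definition h_u (tau r : R) : R := r * BesselJ (tau + 1) r / BesselJ tau r.

(* Main.v *)
Require Import Defs.
From Stdlib Require Import Reals.
From Stdlib Require Import Lra Lia Factorial ClassicalEpsilon ZArith.
From Coquelicot Require Import Coquelicot.
Open Scope R_scope.


Definition Gs (x : R) (n : nat) : R :=
  INR (fact n) * Rpower (INR n) x / prod_f_R0 (fun k => x + INR k) n.

Lemma prod_pos (x : R) n : 0 < x -> 0 < prod_f_R0 (fun k => x + INR k) n.
Proof.
  intro Hx; induction n; simpl.
  - lra.
  - apply Rmult_lt_0_compat; auto. pose proof (pos_INR (S n)). simpl in H |- *. lra.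
Qed.

Lemma Gs_pos x n : 0 < x -> 0 < Gs x n.
Proof.
  intro Hx. unfold Gs, Rdiv. apply Rmult_lt_0_compat.
  apply Rmult_lt_0_compat. apply lt_0_INR, lt_O_fact. apply exp_pos.
  apply Rinv_0_lt_compat, prod_pos; auto.
Qed.

Lemma ln_le_sub1 u : 0 < u -> ln u <= u - 1.
Proof.
  intro Hu. rewrite <- (ln_exp (u - 1)). apply ln_le; auto.
  pose proof (exp_ineq1_le (u-1)). lra.
Qed.

Lemma ln_ratio_bounds (n : nat) :
  (0 < n)%nat ->
  / INR (S n) <= ln (INR (S n)) - ln (INR n) <= / INR n.
Proof.
  intro Hn. assert (Hn' : 0 < INR n) by (apply lt_0_INR; auto).
  rewrite S_INR. split.
  - assert (H := ln_le_sub1 (INR n / (INR n + 1))).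
    replace (INR n) with ((INR n / (INR n + 1)) * (INR n + 1)) at 3 by (field; lra).
    rewrite ln_mult.
    assert (INR n / (INR n + 1) - 1 = - / (INR n +1)) by (field; lra).
    assert (0 < INR n / (INR n + 1)) by (apply Rdiv_lt_0_compat; lra).
    specialize (H H1). lra. apply Rdiv_lt_0_compat; lra. lra.
  - assert (H := ln_le_sub1 ((INR n + 1) / INR n)).
    replace (INR n + 1) with (INR n * ((INR n + 1) / INR n)) at 1 by (field; lra).
    rewrite ln_mult.
    assert ((INR n + 1) / INR n - 1 = / INR n) by (field; lra).
    assert (0 < (INR n + 1) / INR n) by (apply Rdiv_lt_0_compat; lra).
    specialize (H H1). lra. lra. apply Rdiv_lt_0_compat; lra.
Qed.

Lemma Gs_step x n : 0 < x -> (0 < n)%nat ->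
  Gs x (S n) = Gs x n * (INR (S n) * exp (x * (ln (INR (S n)) - ln (INR n))) / (x + INR (S n))).
Proof.
  intros Hx Hn. unfold Gs, Rpower.
  assert (0 < INR n) by (apply lt_0_INR; auto).
  pose proof (prod_pos x n Hx).
  assert (0 < x + INR (S n)) by (pose proof (pos_INR (S n)); lra).
  change (prod_f_R0 (fun k => x + INR k) (S n)) with
    (prod_f_R0 (fun k => x + INR k) n * (x + INR (S n))).
  change (fact (S n)) with (S n * fact n)%nat. rewrite mult_INR.
  replace (x * ln (INR (S n))) with (x * ln (INR n) + x * (ln (INR (S n)) - ln (INR n))) by ring.
  rewrite exp_plus. field. lra.
Qed.

Lemma exp_le_m a b : a <= b -> exp a <= exp b.
Proof. intro H. destruct (Req_dec a b). subst; lra. apply Rlt_le, exp_increasing; lra. Qed.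

Definition rho x n := INR (S n) * exp (x * (ln (INR (S n)) - ln (INR n))) / (x + INR (S n)).

Lemma rho_ge1 x n : 0 < x -> (0 < n)%nat -> 1 <= rho x n.
Proof.
  intros Hx Hn. unfold rho. destruct (ln_ratio_bounds n Hn) as [H1 H2].
  pose proof (exp_ineq1_le (x * (ln (INR (S n)) - ln (INR n)))).
  assert (Hs : 0 < INR (S n)) by (apply lt_0_INR; lia).
  assert (x * / INR (S n) <= x * (ln (INR (S n)) - ln (INR n))) by (apply Rmult_le_compat_l; lra).
  apply Rmult_le_reg_r with (x + INR (S n)). lra.
  unfold Rdiv. rewrite Rmult_assoc, Rinv_l, Rmult_1_r by lra.
  replace (1 * (x + INR (S n))) with (INR (S n) * (1 + x * / INR (S n))) by (field; lra).
  apply Rmult_le_compat_l; lra.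
Qed.

Lemma rho_le x n : 0 < x -> (0 < n)%nat ->
  rho x n <= exp (x * (x + 1) * (/ INR n - / INR (S n))).
Proof.
  intros Hx Hn. unfold rho. destruct (ln_ratio_bounds n Hn) as [H1 H2].
  assert (Hn' : 0 < INR n) by (apply lt_0_INR; auto).
  assert (Hs : INR (S n) = INR n + 1) by apply S_INR.
  rewrite Hs in *.
  assert (A : exp (x * (ln (INR n + 1) - ln (INR n))) <= exp (x * / INR n)).
  { apply exp_le_m. apply Rmult_le_compat_l; lra. }
  assert (B : (INR n + 1) / (x + (INR n + 1)) <= exp (- (x / (x + (INR n + 1))))).
  { pose proof (exp_ineq1_le (- (x / (x + (INR n + 1))))).
    replace ((INR n + 1) / (x + (INR n + 1))) with (1 + - (x / (x + (INR n + 1)))) by (field; lra). lra. }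
  apply Rle_trans with (exp (x * / INR n) * exp (- (x / (x + (INR n + 1))))).
  { replace ((INR n + 1) * exp (x * (ln (INR n + 1) - ln (INR n))) / (x + (INR n + 1)))
      with (exp (x * (ln (INR n + 1) - ln (INR n))) * ((INR n + 1) / (x + (INR n + 1)))) by (field; lra).
    apply Rmult_le_compat; try lra. apply Rlt_le, exp_pos. apply Rlt_le, Rdiv_lt_0_compat; lra. }
  rewrite <- exp_plus. apply exp_le_m.
  replace (x * / INR n + - (x / (x + (INR n + 1)))) with (x * (x+1) / (INR n * (x + (INR n + 1)))) by (field; lra).
  replace (x * (x + 1) * (/ INR n - / (INR n + 1))) with (x * (x+1) / (INR n * (INR n + 1))) by (field; lra).
  unfold Rdiv. apply Rmult_le_compat_l. nra.
  apply Rinv_le_contravar. nra. nra.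
Qed.

Lemma Gs_bound x m : 0 < x -> Gs x (S m) <= Gs x 1 * exp (x * (x + 1) * (1 - / INR (S m))).
Proof.
  intro Hx. induction m.
  - simpl (INR 1). replace (1 - / 1) with 0 by field. rewrite Rmult_0_r, exp_0. lra.
  - rewrite Gs_step by (auto; lia). fold (rho x (S m)).
    pose proof (rho_le x (S m) Hx ltac:(lia)).
    pose proof (Gs_pos x (S m) Hx).
    apply Rle_trans with (Gs x 1 * exp (x * (x + 1) * (1 - / INR (S m))) * exp (x * (x + 1) * (/ INR (S m) - / INR (S (S m))))).
    apply Rmult_le_compat; auto; try lra. pose proof (rho_ge1 x (S m) Hx ltac:(lia)); lra.
    rewrite Rmult_assoc, <- exp_plus. right. f_equal. f_equal. ring.
Qed.

Lemma Un_cv_shift (u : nat -> R) l : Un_cv (fun m => u (S m)) l -> Un_cv u l.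
Proof.
  intros H eps He. destruct (H eps He) as [N HN]. exists (S N). intros n Hn.
  destruct n. lia. apply HN. lia.
Qed.

Lemma Rlim_spec (u : nat -> R) l : Un_cv u l -> Un_cv u (Rlim u) /\ Rlim u = l.
Proof.
  intro H. assert (H1 : Un_cv u (Rlim u)).
  { unfold Rlim. apply (epsilon_spec (inhabits 0) (fun l => Un_cv u l)). exists l; auto. }
  split; auto. apply UL_sequence with u; auto.
Qed.

Lemma Gamma_cv x : 0 < x -> Un_cv (Gs x) (Gamma x) /\ 0 < Gamma x.
Proof.
  intro Hx.
  assert (Hg : Un_growing (fun m => Gs x (S m))).
  { intro m. simpl. rewrite (Gs_step x (S m)) by (auto; lia). fold (rho x (S m)).
    pose proof (rho_ge1 x (S m) Hx ltac:(lia)). pose proof (Gs_pos x (S m) Hx).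
    change (Gs x (S m) <= Gs x (S m) * rho x (S m)). nra. }
  assert (Hb : has_ub (fun m => Gs x (S m))).
  { exists (Gs x 1 * exp (x * (x + 1))). intros y [m ->].
    apply Rle_trans with (1 := Gs_bound x m Hx).
    apply Rmult_le_compat_l. apply Rlt_le, Gs_pos; auto. apply exp_le_m.
    assert (0 < / INR (S m)) by (apply Rinv_0_lt_compat, lt_0_INR; lia).
    assert (0 < x * (x+1)) by nra. nra. }
  destruct (growing_cv _ Hg Hb) as [l Hl].
  pose proof (Un_cv_shift _ _ Hl) as Hl'.
  destruct (Rlim_spec (Gs x) l Hl') as [_ E].
  assert (Gamma x = l) as ->. { rewrite <- E. reflexivity. }
  split; auto.
  pose proof (growing_ineq _ _ Hg Hl 0). pose proof (Gs_pos x 1 Hx). simpl in H. lra.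
Qed.

Lemma prod_shift x n :
  prod_f_R0 (fun k => x + 1 + INR k) n * x = prod_f_R0 (fun k => x + INR k) (S n).
Proof.
  induction n.
  - simpl. ring.
  - change (prod_f_R0 (fun k => x + 1 + INR k) (S n)) with
      (prod_f_R0 (fun k => x + 1 + INR k) n * (x + 1 + INR (S n))).
    change (prod_f_R0 (fun k => x + INR k) (S (S n))) with
      (prod_f_R0 (fun k => x + INR k) (S n) * (x + INR (S (S n)))).
    rewrite <- IHn. rewrite (S_INR (S n)). ring.
Qed.

Lemma Gs_rec x n : 0 < x -> (0 < n)%nat ->
  Gs (x + 1) n = Gs x n * (x * INR n / (x + 1 + INR n)).
Proof.
  intros Hx Hn. unfold Gs. assert (0 < INR n) by (apply lt_0_INR; auto).
  rewrite Rpower_plus, Rpower_1 by auto.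
  pose proof (prod_shift x n). 
  change (prod_f_R0 (fun k => x + INR k) (S n)) with
      (prod_f_R0 (fun k => x + INR k) n * (x + INR (S n))) in H0.
  rewrite S_INR in H0.
  pose proof (prod_pos x n Hx). pose proof (prod_pos (x+1) n ltac:(lra)).
  replace (prod_f_R0 (fun k : nat => x + 1 + INR k) n) with
    (prod_f_R0 (fun k : nat => x + INR k) n * (x + (INR n + 1)) / x) by (rewrite <- H0; field; lra).
  field. split; lra.
Qed.

Lemma cv_frac x : 0 < x -> Un_cv (fun n => x * INR n / (x + 1 + INR n)) x.
Proof.
  intros Hx eps He.
  destruct (archimed (x * (x+1) / eps)) as [H1 _].
  assert (0 <= IZR (up (x * (x + 1) / eps))).
  { assert (0 < x * (x+1)/eps) by (apply Rdiv_lt_0_compat; nra). lra. }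
  exists (Z.to_nat (up (x * (x + 1) / eps))). intros n Hn.
  unfold Rdist. apply le_INR in Hn. rewrite INR_IZR_INZ, Z2Nat.id in Hn by (apply le_IZR; lra).
  assert (0 <= INR n) by apply pos_INR.
  replace (x * INR n / (x + 1 + INR n) - x) with (- (x * (x+1) / (x + 1 + INR n))) by (field; lra).
  rewrite Rabs_Ropp, Rabs_pos_eq by (apply Rlt_le, Rdiv_lt_0_compat; nra).
  apply Rmult_lt_reg_r with (x + 1 + INR n). lra.
  unfold Rdiv. rewrite Rmult_assoc, Rinv_l, Rmult_1_r by lra.
  assert (x * (x+1) < eps * INR n).
  { apply Rmult_lt_reg_r with (/ eps). apply Rinv_0_lt_compat; lra.
    replace (eps * INR n * / eps) with (INR n) by (field; lra). unfold Rdiv in H1. lra. }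
  nra.
Qed.

Lemma Gamma_rec x : 0 < x -> Gamma (x + 1) = x * Gamma x.
Proof.
  intro Hx. destruct (Gamma_cv x Hx) as [H1 _].
  assert (Un_cv (Gs (x+1)) (Gamma x * x)).
  { apply Un_cv_shift.
    assert (Hc := CV_mult _ _ _ _ H1 (cv_frac x Hx)).
    intros eps He. destruct (Hc eps He) as [N HN]. exists N. intros n Hn.
    rewrite Gs_rec by (auto; lia). specialize (HN (S n) ltac:(lia)). exact HN. }
  destruct (Rlim_spec _ _ H) as [_ E]. rewrite Rmult_comm, <- E. reflexivity.
Qed.

Definition beta (b : R) (m : nat) : R :=
  (-1) ^ m / (INR (fact m) * Gamma (INR m + b + 1)) * (/ 4) ^ m.

Lemma Gamma_m_pos b m : -1 < b -> 0 < Gamma (INR m + b + 1).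
Proof. intro H. apply Gamma_cv. pose proof (pos_INR m). lra. Qed.

Lemma beta_succ b m : -1 < b ->
  beta b (S m) = - beta b m / (4 * INR (S m) * (INR m + b + 1)).
Proof.
  intro Hb. unfold beta.
  replace (INR (S m) + b + 1) with ((INR m + b + 1) + 1) by (rewrite S_INR; ring).
  rewrite Gamma_rec by (pose proof (pos_INR m); lra).
  pose proof (Gamma_m_pos b m Hb). pose proof (pos_INR m).
  change (fact (S m)) with (S m * fact m)%nat. rewrite mult_INR.
  assert (0 < INR (fact m)) by (apply lt_0_INR, lt_O_fact).
  assert (0 < INR (S m)) by (apply lt_0_INR; lia).
  simpl pow. field. repeat split; lra.
Qed.

Lemma beta_nz b m : -1 < b -> beta b m <> 0.
Proof.
  intro Hb. unfold beta. pose proof (Gamma_m_pos b m Hb).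
  assert (0 < INR (fact m)) by (apply lt_0_INR, lt_O_fact).
  apply Rmult_integral_contrapositive; split.
  apply Rmult_integral_contrapositive; split. apply pow_nonzero; lra.
  apply Rinv_neq_0_compat. nra. apply pow_nonzero; lra.
Qed.

Lemma cv_0_bound (u : nat -> R) C : 0 < C -> (forall n, 0 <= u n <= C / INR (S n)) -> Un_cv u 0.
Proof.
  intros HC Hu eps He.
  destruct (archimed (C / eps)) as [H1 _].
  assert (0 <= IZR (up (C / eps))).
  { assert (0 < C/eps) by (apply Rdiv_lt_0_compat; nra). lra. }
  exists (Z.to_nat (up (C / eps))). intros n Hn.
  unfold Rdist. apply le_INR in Hn. rewrite INR_IZR_INZ, Z2Nat.id in Hn by (apply le_IZR; lra).
  rewrite Rminus_0_r. destruct (Hu n) as [A B]. rewrite Rabs_pos_eq by lra.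
  rewrite S_INR in B. assert (0 <= INR n) by apply pos_INR.
  apply Rle_lt_trans with (1 := B).
  apply Rmult_lt_reg_r with (INR n + 1). lra.
  unfold Rdiv. rewrite Rmult_assoc, Rinv_l, Rmult_1_r by lra.
  assert (C < eps * (INR n + 1)).
  { apply Rmult_lt_reg_r with (/ eps). apply Rinv_0_lt_compat; lra.
    replace (eps * (INR n + 1) * / eps) with (INR n + 1) by (field; lra). unfold Rdiv in H1. lra. }
  lra.
Qed.

Lemma beta_radius b : -1 < b -> CV_radius (beta b) = p_infty.
Proof.
  intro Hb. apply CV_radius_infinite_DAlembert. intro; apply beta_nz; auto.
  apply is_lim_seq_Reals. apply cv_0_bound with (/ (4 * (b + 1))).
  apply Rinv_0_lt_compat; lra.
  intro n. rewrite beta_succ by auto. pose proof (beta_nz b n Hb).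
  pose proof (pos_INR n).
  assert (0 < INR (S n)) by (apply lt_0_INR; lia).
  replace (- beta b n / (4 * INR (S n) * (INR n + b + 1)) / beta b n) with
    (- / (4 * INR (S n) * (INR n + b + 1))) by (field; repeat split; lra).
  rewrite Rabs_Ropp, Rabs_pos_eq by (apply Rlt_le, Rinv_0_lt_compat; nra).
  split. apply Rlt_le, Rinv_0_lt_compat; nra.
  unfold Rdiv. rewrite <- Rinv_mult. apply Rinv_le_contravar. nra.
  rewrite S_INR. nra.
Qed.

Lemma in_radius b x : -1 < b -> Rbar_lt (Rabs x) (CV_radius (beta b)).
Proof. intro Hb. rewrite beta_radius; simpl; auto. Qed.

Lemma Bessel_eq b r : -1 < b -> 0 < r ->
  BesselJ b r = Rpower (r / 2) b * PSeries (beta b) (r ^ 2).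
Proof.
  intros Hb Hr. unfold BesselJ.
  apply Rlim_spec.
  assert (Hs := PSeries_correct _ _ (CV_radius_inside _ _ (in_radius b (r^2) Hb))).
  apply is_pseries_R, is_series_Reals in Hs.
  intros eps He. destruct (Hs (eps / (Rpower (r/2) b)) ltac:(apply Rdiv_lt_0_compat; auto; apply exp_pos)) as [N HN].
  exists N. intros n Hn. specialize (HN n Hn).
  assert (E : sum_f_R0 (fun m => (-1) ^ m / (INR (fact m) * Gamma (INR m + b + 1)) * Rpower (r / 2) (2 * INR m + b)) n
    = Rpower (r / 2) b * sum_f_R0 (fun m => beta b m * (r ^ 2) ^ m) n).
  { rewrite scal_sum. apply sum_eq. intros i _. unfold beta.
    rewrite Rpower_plus. replace (2 * INR i) with (INR (2 * i)) by (rewrite mult_INR; simpl; ring).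
    rewrite Rpower_pow by lra. rewrite pow_mult.
    replace ((r/2)^2) with (/4 * r^2) by field. rewrite Rpow_mult_distr. ring. }
  rewrite E. unfold Rdist in *. rewrite <- Rmult_minus_distr_l, Rabs_mult.
  assert (0 < Rpower (r/2) b) by apply exp_pos.
  rewrite (Rabs_pos_eq (Rpower _ _)) by lra.
  apply Rmult_lt_reg_r with (/ Rpower (r/2) b). apply Rinv_0_lt_compat; lra.
  replace (Rpower (r / 2) b * Rabs (sum_f_R0 (fun m : nat => beta b m * (r ^ 2) ^ m) n - PSeries (beta b) (r ^ 2)) *
    / Rpower (r / 2) b) with (Rabs (sum_f_R0 (fun m : nat => beta b m * (r ^ 2) ^ m) n - PSeries (beta b) (r ^ 2))) by (field; lra).
  exact HN.
Qed.

Lemma PSeries_nonneg (a : nat -> R) x :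
  (forall n, 0 <= a n) -> 0 <= x -> ex_pseries a x -> 0 <= PSeries a x.
Proof.
  intros Ha Hx He. rewrite <- (PSeries_const_0 x). unfold PSeries.
  apply Series_le. intro n. split. rewrite Rmult_0_l; lra.
  rewrite Rmult_0_l. apply Rmult_le_pos; auto. apply pow_le; auto.
  apply ex_pseries_R; auto.
Qed.

Lemma radius_of_bound (a : nat -> R) r M :
  (forall n, Rabs (a n * r ^ n) <= M) -> Rbar_le r (CV_radius a).
Proof.
  intro H. destruct (CV_radius_bounded a) as [Hub _]. apply Hub. exists M; auto.
Qed.

Lemma sum_term_le (g : nat -> R) n N : (forall k, 0 <= g k) -> (n <= N)%nat -> g n <= sum_f_R0 g N.
Proof.
  intros Hg Hn. induction N.
  - assert (n = 0%nat) by lia. subst. simpl. lra.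
  - destruct (Nat.eq_dec n (S N)). subst. simpl.
    assert (0 <= sum_f_R0 g N). { clear - Hg. induction N; simpl. apply Hg. pose proof (Hg (S N)). lra. }
    lra.
    simpl. pose proof (Hg (S N)). assert (n <= N)%nat by lia. specialize (IHN H0). lra.
Qed.

Lemma fin_radius (a : nat -> R) N : (forall k, (N < k)%nat -> a k = 0) ->
  forall x, Rbar_lt (Rabs x) (CV_radius a).
Proof.
  intros Ha x.
  assert (H : Rbar_le (Rabs x + 1) (CV_radius a)).
  { apply radius_of_bound with (sum_f_R0 (fun k => Rabs (a k * (Rabs x + 1) ^ k)) N).
    intro n. destruct (le_lt_dec n N).
    apply sum_term_le with (g := fun k => Rabs (a k * (Rabs x + 1) ^ k)); auto. intro; apply Rabs_pos.
    rewrite Ha by auto. rewrite Rmult_0_l, Rabs_R0.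
    assert (0 <= sum_f_R0 (fun k => Rabs (a k * (Rabs x + 1) ^ k)) N).
    { apply cond_pos_sum. intro; apply Rabs_pos. } lra. }
  destruct (CV_radius a) as [r| |]; simpl in *; auto; lra.
Qed.

Lemma PSeries_fin (a : nat -> R) N x : (forall k, (N < k)%nat -> a k = 0) ->
  PSeries a x = sum_f_R0 (fun k => a k * x ^ k) N.
Proof.
  intro Ha. rewrite (PSeries_decr_n a N x).
  rewrite (PSeries_ext _ (fun _ => 0)). rewrite PSeries_const_0. ring.
  intro n. unfold PS_decr_n. apply Ha. lia.
  apply CV_radius_inside. apply (fin_radius a N Ha).
Qed.

Section F.
Variable tau : R.
Hypothesis Htau : -1 < tau.

Definition f t := PSeries (beta tau) t.
Definition f1 t := PSeries (PS_derive (beta tau)) t.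
Definition f2 t := PSeries (PS_derive (PS_derive (beta tau))) t.

Lemma rad_d1 x : Rbar_lt (Rabs x) (CV_radius (PS_derive (beta tau))).
Proof. rewrite CV_radius_derive. apply in_radius; auto. Qed.
Lemma rad_d2 x : Rbar_lt (Rabs x) (CV_radius (PS_derive (PS_derive (beta tau)))).
Proof. rewrite !CV_radius_derive. apply in_radius; auto. Qed.

Lemma f_der x : is_derive f x (f1 x).
Proof. apply is_derive_PSeries, in_radius; auto. Qed.
Lemma f1_der x : is_derive f1 x (f2 x).
Proof. apply is_derive_PSeries, rad_d1. Qed.

Lemma beta_shift m : beta (tau + 1) m = -4 * INR (S m) * beta tau (S m).
Proof.
  rewrite beta_succ by auto. unfold beta.
  replace (INR m + (tau + 1) + 1) with ((INR m + tau + 1) + 1) by ring.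
  rewrite Gamma_rec by (pose proof (pos_INR m); lra).
  pose proof (Gamma_m_pos tau m Htau). pose proof (pos_INR m).
  assert (0 < INR (fact m)) by (apply lt_0_INR, lt_O_fact).
  assert (0 < INR (S m)) by (apply lt_0_INR; lia).
  field. repeat split; lra.
Qed.

Lemma g_eq t : PSeries (beta (tau + 1)) t = -4 * f1 t.
Proof.
  unfold f1. rewrite <- PSeries_scal. apply PSeries_ext. intro n.
  unfold PS_scal, PS_derive. rewrite beta_shift.
  change (scal (-4) (INR (S n) * beta tau (S n))) with (-4 * (INR (S n) * beta tau (S n))). ring.
Qed.

Lemma f_ode t : t * f2 t + (tau + 1) * f1 t + f t / 4 = 0.
Proof.
  unfold f2, f1, f.
  rewrite <- PSeries_incr_1, <- PSeries_scal.
  replace (PSeries (beta tau) t / 4) with (PSeries (PS_scal (/4) (beta tau)) t)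
    by (rewrite PSeries_scal; unfold Rdiv; ring).
  assert (E1 : ex_pseries (PS_incr_1 (PS_derive (PS_derive (beta tau)))) t).
  { apply ex_pseries_incr_1, CV_radius_inside, rad_d2. }
  assert (E2 : ex_pseries (PS_scal (tau + 1) (PS_derive (beta tau))) t).
  { apply ex_pseries_scal. apply Rmult_comm. apply CV_radius_inside, rad_d1. }
  assert (E3 : ex_pseries (PS_scal (/4) (beta tau)) t).
  { apply ex_pseries_scal. apply Rmult_comm. apply CV_radius_inside, in_radius; auto. }
  rewrite <- PSeries_plus by auto. rewrite <- PSeries_plus by (auto; apply ex_pseries_plus; auto).
  rewrite <- (PSeries_const_0 t). apply PSeries_ext. intro n.
  unfold PS_plus, PS_scal, PS_incr_1, PS_derive. simpl. unfold plus, scal, mult, zero; simpl. unfold mult; simpl.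
  destruct n.
  - rewrite beta_succ by auto. simpl. field. lra.
  - rewrite (beta_succ tau (S n)) by auto. rewrite (beta_succ tau n) by auto.
    pose proof (beta_nz tau n Htau). pose proof (pos_INR n).
    rewrite !S_INR.
    replace (match n with 0%nat => 1 | S _ => INR n + 1 end) with (INR n + 1) by (destruct n; simpl; ring).
    field. repeat split; lra.
Qed.

Lemma f0_pos : 0 < f 0.
Proof.
  unfold f. rewrite PSeries_0. unfold beta. simpl.
  pose proof (Gamma_m_pos tau 0 Htau). simpl in H.
  replace (0 + tau + 1) with (INR 0 + tau + 1) by (simpl; ring).
  apply Rmult_lt_0_compat; [|lra]. apply Rdiv_lt_0_compat. lra. simpl. lra.
Qed.

Lemma f_cont x : continuity_pt f x.
Proof. apply PSeries_continuity, in_radius; auto. Qed.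

Lemma Bessel_f r : 0 < r -> BesselJ tau r = Rpower (r/2) tau * f (r ^ 2).
Proof. intro Hr. apply Bessel_eq; auto. Qed.

Lemma Bessel_g r : 0 < r -> BesselJ (tau + 1) r = Rpower (r/2) (tau + 1) * (-4 * f1 (r ^ 2)).
Proof. intro Hr. rewrite Bessel_eq by (auto; lra). rewrite g_eq. auto. Qed.

Lemma h_u_eq r : 0 < r -> f (r ^ 2) <> 0 -> h_u tau r = -2 * r ^ 2 * f1 (r ^ 2) / f (r ^ 2).
Proof.
  intros Hr Hf. unfold h_u. rewrite Bessel_f, Bessel_g by auto.
  rewrite Rpower_plus, Rpower_1 by lra.
  assert (0 < Rpower (r/2) tau) by apply exp_pos.
  field. split; lra.
Qed.

End F.

Lemma f_pos tau j : -1 < tau -> 0 < j ->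
  (forall r, 0 < r < j -> BesselJ tau r <> 0) ->
  forall t, 0 <= t < j ^ 2 -> 0 < f tau t.
Proof.
  intros Htau Hj Hfirst.
  assert (Hnz : forall t, 0 < t < j ^ 2 -> f tau t <> 0).
  { intros t Ht Hf. assert (0 < sqrt t) by (apply sqrt_lt_R0; lra).
    assert (sqrt t < j).
    { rewrite <- (sqrt_pow2 j) by lra. apply sqrt_lt_1_alt. lra. }
    apply (Hfirst (sqrt t)). lra.
    rewrite Bessel_f by auto. rewrite pow2_sqrt by lra. rewrite Hf. ring. }
  intros t Ht. destruct (Req_dec t 0). subst. apply f0_pos; auto.
  destruct (Rlt_le_dec 0 (f tau t)); auto.
  exfalso. pose proof (f0_pos tau Htau).
  destruct (IVT_cor (f tau) 0 t (fun x => f_cont tau Htau x)) as [z [Hz Hfz]]. lra.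
  nra.
  destruct (Req_dec z 0). subst. lra.
  apply (Hnz z); auto. lra.
Qed.

Section C.
Variable nu : R.
Hypothesis Hnu : -1 < nu.

Fixpoint cs (n : nat) : nat -> R :=
  match n with
  | O => fun _ => 0
  | S m => fun k => if (k <=? m)%nat then cs m k else
                    if (k =? S m)%nat then
                      ((if (S m =? 1)%nat then / 4 else 0) +
                       sum_f_R0 (fun i => cs m i * cs m (S m - i)) (S m)) / (INR (S m) + nu)
                    else 0
  end.

Definition c (k : nat) : R := cs k k.

Lemma cs_S m k : cs (S m) k = if (k <=? m)%nat then cs m k else
                    if (k =? S m)%nat then
                      ((if (S m =? 1)%nat then / 4 else 0) +
                       sum_f_R0 (fun i => cs m i * cs m (S m - i)) (S m)) / (INR (S m) + nu)
                    else 0.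
Proof. reflexivity. Qed.

Lemma cs_out n k : (n < k)%nat -> cs n k = 0.
Proof.
  induction n; intro H; simpl. auto.
  destruct (Nat.leb_spec k n). lia. destruct (Nat.eqb_spec k (S n)). lia. auto.
Qed.

Lemma cs_stable n k : (k <= n)%nat -> cs n k = c k.
Proof.
  induction n; intro H.
  - assert (k = 0%nat) by lia. subst. reflexivity.
  - destruct (Nat.eq_dec k (S n)). subst. reflexivity.
    simpl. destruct (Nat.leb_spec k n). apply IHn; auto. lia.
Qed.

Lemma c0 : c 0 = 0.
Proof. reflexivity. Qed.

Lemma c_rec n : (INR n + nu) * c n = (if (n =? 1)%nat then / 4 else 0) + PS_mult c c n.
Proof.
  destruct n.
  - rewrite c0. unfold PS_mult. simpl. rewrite c0. ring.
  - assert (E : c (S n) = ((if (S n =? 1)%nat then / 4 else 0) +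
                       sum_f_R0 (fun i => cs n i * cs n (S n - i)) (S n)) / (INR (S n) + nu)).
    { unfold c at 1. rewrite cs_S. rewrite (proj2 (Nat.leb_gt (S n) n)) by lia.
      rewrite Nat.eqb_refl. reflexivity. }
    rewrite E. assert (0 < INR (S n) + nu) by (rewrite S_INR; pose proof (pos_INR n); lra).
    unfold PS_mult. rewrite (sum_eq (fun i => cs n i * cs n (S n - i)) (fun k => c k * c (S n - k))).
    field. lra.
    intros i Hi. destruct (Nat.eq_dec i 0). subst. rewrite Nat.sub_0_r. rewrite (cs_out n (S n)) by lia. rewrite c0. ring.
    destruct (Nat.eq_dec i (S n)). subst. rewrite Nat.sub_diag. rewrite (cs_stable n 0) by lia. rewrite c0. ring.
    rewrite !cs_stable by lia. reflexivity.
Qed.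

Lemma c_nonneg n : 0 <= c n.
Proof.
  induction n as [n IH] using (well_founded_induction lt_wf).
  destruct n. rewrite c0; lra.
  assert (0 < INR (S n) + nu) by (rewrite S_INR; pose proof (pos_INR n); lra).
  assert (H1 : 0 <= (if (S n =? 1)%nat then / 4 else 0) + PS_mult c c (S n)).
  { apply Rplus_le_le_0_compat. destruct (S n =? 1)%nat; lra.
    unfold PS_mult. apply cond_pos_sum. intro i.
    destruct (Nat.eq_dec i 0). subst. rewrite c0. lra.
    destruct (le_lt_dec i (S n)).
    destruct (Nat.eq_dec i (S n)). subst. rewrite Nat.sub_diag, c0. lra.
    apply Rmult_le_pos; apply IH; lia.
    replace (S n - i)%nat with 0%nat by lia. rewrite c0. lra. }
  rewrite <- c_rec in H1. apply Rmult_le_reg_l with (INR (S n) + nu); lra.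
Qed.

Lemma c1 : c 1 = / (4 * (1 + nu)).
Proof.
  pose proof (c_rec 1). simpl in H. unfold PS_mult in H. simpl in H. rewrite c0 in H.
  apply Rmult_eq_reg_l with (1 + nu). rewrite H. field. lra. lra.
Qed.

Lemma c2_pos : 0 < c 2.
Proof.
  pose proof (c_rec 2). unfold PS_mult in H. simpl in H. rewrite c0 in H.
  rewrite c1 in H.
  assert (0 < 1 + 1 + nu) by lra.
  assert (0 < / (4 * (1 + nu))) by (apply Rinv_0_lt_compat; lra).
  apply Rmult_lt_reg_l with (1 + 1 + nu). lra. rewrite H. nra.
Qed.

End C.

Lemma der_cont g x l : is_derive g x l -> continuity_pt g x.
Proof. intro H. apply is_derive_Reals in H. apply derivable_continuous_pt. exists l; exact H. Qed.

Section Q.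
Variable tau T : R.
Hypothesis Htau : -1 < tau.
Hypothesis HT : 0 < T.
Hypothesis Hf : forall t, 0 <= t < T -> 0 < f tau t.
Variable e : nat -> R.
Hypothesis He0 : e 0%nat = 0.
Hypothesis Hepos : forall n, 0 <= e n.
Hypothesis Hrad : forall t, 0 <= t < T -> Rbar_lt (Rabs t) (CV_radius e).

Definition p t := PSeries e t.
Definition p1 t := PSeries (PS_derive e) t.
Definition q t := PSeries (PS_decr_1 e) t.
Definition F t := PSeries (PS_Int (PS_decr_1 e)) t.
Definition Rf t := t * p1 t - t / 4 + tau * p t - p t ^ 2.
Definition P t := p t * f tau t + t * f1 tau t.
Definition Q t := Rpower t tau * exp (- F t) * P t.
Definition Qd t := Rpower t tau / t * exp (- F t) * f tau t * Rf t.

Lemma rad_q t : 0 <= t < T -> Rbar_lt (Rabs t) (CV_radius (PS_decr_1 e)).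
Proof. intro H. rewrite CV_radius_decr_1. auto. Qed.
Lemma rad_F t : 0 <= t < T -> Rbar_lt (Rabs t) (CV_radius (PS_Int (PS_decr_1 e))).
Proof. intro H. rewrite CV_radius_Int. apply rad_q; auto. Qed.

Lemma p_der t : 0 <= t < T -> is_derive p t (p1 t).
Proof. intro H. apply is_derive_PSeries, Hrad; auto. Qed.

Lemma F_der t : 0 <= t < T -> is_derive F t (q t).
Proof.
  intro H. unfold q. replace (PSeries (PS_decr_1 e) t) with (PSeries (PS_derive (PS_Int (PS_decr_1 e))) t).
  apply is_derive_PSeries, rad_F; auto.
  apply PSeries_ext. intro n. unfold PS_derive, PS_Int. field.
  pose proof (pos_INR (S n)). rewrite S_INR in *. pose proof (pos_INR n). lra.
Qed.

Lemma p_eq t : p t = t * q t.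
Proof. unfold p, q. apply PSeries_decr_1_aux. auto. Qed.

Lemma F_nonneg t : 0 <= t < T -> 0 <= F t.
Proof.
  intro H. apply PSeries_nonneg. intros [|n]. simpl; lra. unfold PS_Int, PS_decr_1.
  apply Rmult_le_pos. apply Hepos. apply Rlt_le, Rinv_0_lt_compat, lt_0_INR; lia. lra.
  apply CV_radius_inside, rad_F; auto.
Qed.

Lemma Q_der t : 0 < t < T -> is_derive Q t (Qd t).
Proof.
  intro Ht.
  assert (H1 : is_derive (fun x => Rpower x tau) t (tau * Rpower t (tau - 1))).
  { apply is_derive_Reals, derivable_pt_lim_power. lra. }
  assert (H2 : is_derive (fun x => exp (- F x)) t (- q t * exp (- F t))).
  { apply (is_derive_comp exp (fun x => - F x) t (exp (- F t)) (- q t)).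
    apply is_derive_exp. pose proof (is_derive_opp F t (q t) (F_der t ltac:(lra))) as X. exact X. }
  assert (H3 : is_derive P t (p1 t * f tau t + p t * f1 tau t + (1 * f1 tau t + t * f2 tau t))).
  { unfold P. apply is_derive_Reals.
    apply (derivable_pt_lim_plus (fun t => p t * f tau t) (fun t => t * f1 tau t)).
    apply (derivable_pt_lim_mult p (f tau)); apply is_derive_Reals. apply p_der; lra. apply f_der; auto.
    apply (derivable_pt_lim_mult (fun t => t) (f1 tau)). apply derivable_pt_lim_id.
    apply is_derive_Reals. apply f1_der; auto. }
  assert (H := Derive.is_derive_mult _ _ t _ _ (Derive.is_derive_mult _ _ t _ _ H1 H2) H3).
  unfold Q. eapply is_derive_ext. intro x. reflexivity.
  replace (Qd t) with ((tau * Rpower t (tau - 1) * exp (- F t) + Rpower t tau * (- q t * exp (- F t))) * P t +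
     Rpower t tau * exp (- F t) * (p1 t * f tau t + p t * f1 tau t + (1 * f1 tau t + t * f2 tau t))).
  exact H.
  assert (E1 : Rpower t (tau - 1) = Rpower t tau / t).
  { unfold Rminus. rewrite Rpower_plus, Rpower_Ropp, Rpower_1 by lra. reflexivity. }
  assert (E2 : t * f2 tau t = - (tau + 1) * f1 tau t - f tau t / 4).
  { pose proof (f_ode tau Htau t). lra. }
  assert (E3 : q t = p t / t). { rewrite p_eq. field. lra. }
  rewrite E1, E3. unfold Qd, Rf, P.
  replace (Rpower t tau * exp (- F t) * (p1 t * f tau t + p t * f1 tau t + (1 * f1 tau t + t * f2 tau t)))
   with (Rpower t tau * exp (- F t) * (p1 t * f tau t + p t * f1 tau t + (1 * f1 tau t + (- (tau + 1) * f1 tau t - f tau t / 4)))) by (rewrite <- E2; ring).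
  field. lra.
Qed.

Lemma Q_sign (s : R) : (s = 1 \/ s = -1) ->
  (forall t, 0 < t < T -> s * Rf t <= 0) ->
  forall t, 0 < t < T -> s * P t <= 0.
Proof.
  intros Hs HR t0 Ht0.
  destruct (Rle_lt_dec (s * P t0) 0) as [|Hpos]; auto. exfalso.
  set (eta := s * Q t0).
  assert (Heta : 0 < eta).
  { unfold eta, Q. replace (s * (Rpower t0 tau * exp (- F t0) * P t0)) with
      (Rpower t0 tau * exp (- F t0) * (s * P t0)) by ring.
    apply Rmult_lt_0_compat; auto. apply Rmult_lt_0_compat; apply exp_pos. }
  assert (Hmono : forall u, 0 < u < t0 -> eta <= s * Q u).
  { intros u Hu.
    destruct (MVT_gen Q u t0 Qd) as [xi [Hxi Heq]].
    { intros x Hx. rewrite Rmin_left, Rmax_right in Hx by lra. apply Q_der; lra. }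
    { intros x Hx. rewrite Rmin_left, Rmax_right in Hx by lra. apply der_cont with (Qd x). apply Q_der; lra. }
    rewrite Rmin_left, Rmax_right in Hxi by lra.
    assert (s * Qd xi <= 0).
    { unfold Qd. replace (s * (Rpower xi tau / xi * exp (- F xi) * f tau xi * Rf xi)) with
        (Rpower xi tau / xi * exp (- F xi) * f tau xi * (s * Rf xi)) by ring.
      apply Rmult_le_0_l. apply Rlt_le. apply Rmult_lt_0_compat. apply Rmult_lt_0_compat.
      apply Rdiv_lt_0_compat. apply exp_pos. lra. apply exp_pos. apply Hf; lra. apply HR; lra. }
    unfold eta. assert (s * Q t0 - s * Q u = s * Qd xi * (t0 - u)) by (rewrite <- Rmult_minus_distr_l, Heq; ring).
    assert (s * Qd xi * (t0 - u) <= 0). { apply Rmult_le_0_r; lra. }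
    lra. }
  set (G x := q x * f tau x + f1 tau x).
  assert (HGc : continuity_pt G 0).
  { unfold G. apply continuity_pt_plus. apply continuity_pt_mult.
    apply PSeries_continuity, rad_q; lra. apply f_cont; auto.
    apply PSeries_continuity, rad_d1; auto. }
  destruct (HGc 1 ltac:(lra)) as [del [Hdel Hd]].
  set (M := Rabs (G 0) + 1).
  assert (HM : forall x, 0 < x < del -> Rabs (G x) <= M).
  { intros x Hx. assert (Hx' := Hd x). simpl in Hx'. unfold Rdist in Hx'.
    assert (Rabs (G x - G 0) < 1). { apply Hx'. split. unfold D_x, no_cond. split; auto. lra.
      rewrite Rminus_0_r, Rabs_pos_eq by lra. lra. }
    unfold M. pose proof (Rabs_triang_inv (G x) (G 0)). lra. }
  set (m := Rmin del t0 / 2).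
  assert (Hm : 0 < m) by (unfold m; apply Rmin_case; lra).
  set (K := Rmax (Rmax 0 (- ln m)) (ln (M / eta) / (tau + 1)) + 1).
  set (u := exp (- K)).
  assert (HK1 : - ln m < K) by (unfold K; pose proof (Rmax_l (Rmax 0 (- ln m)) (ln (M / eta) / (tau + 1))); pose proof (Rmax_r 0 (- ln m)); lra).
  assert (HK2 : ln (M / eta) / (tau + 1) < K) by (unfold K; pose proof (Rmax_r (Rmax 0 (- ln m)) (ln (M / eta) / (tau + 1))); lra).
  assert (Hu0 : 0 < u) by apply exp_pos.
  assert (Hum : u < m). { unfold u. rewrite <- (exp_ln m) by auto. apply exp_increasing. lra. }
  assert (Hm1 : m < del) by (unfold m; pose proof (Rmin_l del t0); lra).
  assert (Hm2 : m < t0) by (unfold m; pose proof (Rmin_r del t0); lra).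
  specialize (Hmono u ltac:(lra)).
  assert (HMpos : 1 <= M) by (unfold M; pose proof (Rabs_pos (G 0)); lra).
  assert (HGu : Rabs (G u) <= M) by (apply HM; lra).
  assert (HF0 : exp (- F u) <= 1).
  { rewrite <- exp_0. apply exp_le_m. pose proof (F_nonneg u ltac:(lra)). lra. }
  assert (HQu : Rabs (Q u) <= exp (- (tau + 1) * K) * M).
  { unfold Q, P. rewrite p_eq.
    replace (u * q u * f tau u + u * f1 tau u) with (u * G u) by (unfold G; ring).
    replace (Rpower u tau * exp (- F u) * (u * G u)) with ((Rpower u tau * u) * (exp (- F u) * G u)) by ring.
    assert (E : Rpower u tau * u = exp (- (tau + 1) * K)).
    { unfold Rpower, u. rewrite ln_exp. rewrite <- exp_plus. f_equal. ring. }
    rewrite E, Rabs_mult, Rabs_pos_eq by (apply Rlt_le, exp_pos).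
    apply Rmult_le_compat_l. apply Rlt_le, exp_pos.
    rewrite Rabs_mult, Rabs_pos_eq by (apply Rlt_le, exp_pos).
    pose proof (Rabs_pos (G u)). pose proof (exp_pos (- F u)). nra. }
  assert (Hsmall : exp (- (tau + 1) * K) * M < eta).
  { assert (0 < M / eta) by (apply Rdiv_lt_0_compat; lra).
    assert (ln (M / eta) < (tau + 1) * K).
    { apply Rmult_lt_reg_r with (/ (tau + 1)). apply Rinv_0_lt_compat; lra.
      replace ((tau + 1) * K * / (tau + 1)) with K by (field; lra). exact HK2. }
    assert (HH : exp (- (tau + 1) * K) < exp (- ln (M / eta))) by (apply exp_increasing; lra).
    rewrite exp_Ropp, exp_ln in HH by auto.
    replace (/ (M / eta)) with (eta / M) in HH by (field; lra).
    apply Rmult_lt_reg_r with (/ M). apply Rinv_0_lt_compat; lra.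
    replace (exp (- (tau + 1) * K) * M * / M) with (exp (- (tau + 1) * K)) by (field; lra).
    replace (eta * / M) with (eta / M) by reflexivity. exact HH. }
  assert (s * Q u <= Rabs (Q u)).
  { destruct Hs as [-> | ->]. rewrite Rmult_1_l. apply Rle_abs.
    rewrite <- Rabs_Ropp. replace (-1 * Q u) with (- Q u) by ring. apply Rle_abs. }
  lra.
Qed.

End Q.

Definition ind (n : nat) : R := if (n =? 1)%nat then / 4 else 0.
Definition rc (tau : R) (e : nat -> R) (n : nat) : R :=
  (INR n + tau) * e n - ind n - PS_mult e e n.

Lemma ind_rad x : Rbar_lt (Rabs x) (CV_radius ind).
Proof. apply (fin_radius ind 1). intros k Hk. unfold ind. destruct (Nat.eqb_spec k 1). lia. auto. Qed.

Lemma ind_ps x : PSeries ind x = x / 4.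
Proof.
  rewrite (PSeries_fin ind 1). simpl. unfold ind. simpl. field.
  intros k Hk. unfold ind. destruct (Nat.eqb_spec k 1). lia. auto.
Qed.

Lemma Rf_series tau e t : Rbar_lt (Rabs t) (CV_radius e) ->
  Rf tau e t = PSeries (rc tau e) t /\ ex_pseries (rc tau e) t.
Proof.
  intro Hr.
  set (a1 := PS_incr_1 (PS_derive e)).
  set (a3 := PS_scal tau e).
  set (a4 := PS_mult e e).
  assert (E1 : ex_pseries a1 t) by (apply ex_pseries_incr_1, ex_pseries_derive; auto).
  assert (E2 : ex_pseries ind t) by (apply CV_radius_inside, ind_rad).
  assert (E3 : ex_pseries a3 t) by (apply ex_pseries_scal; [apply Rmult_comm | apply CV_radius_inside; auto]).
  assert (E4 : ex_pseries a4 t) by (apply ex_pseries_mult; auto).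
  assert (Ext : forall n, rc tau e n = PS_minus (PS_plus (PS_minus a1 ind) a3) a4 n).
  { intro n. unfold rc, PS_minus, PS_plus, PS_opp, a1, a3, a4, PS_scal, PS_incr_1, PS_derive.
    unfold plus, opp, scal, mult; simpl. unfold plus, opp, mult; simpl.
    destruct n. simpl. unfold zero; simpl. ring. change (match n with 0%nat => 1 | S _ => INR n + 1 end) with (INR (S n)). ring. }
  assert (E : ex_pseries (PS_minus (PS_plus (PS_minus a1 ind) a3) a4) t).
  { apply ex_pseries_minus; auto. apply ex_pseries_plus; auto. apply ex_pseries_minus; auto. }
  split.
  - rewrite (PSeries_ext _ _ _ Ext).
    rewrite PSeries_minus, PSeries_plus, PSeries_minus; auto.
    unfold a1, a3, a4. rewrite PSeries_incr_1, PSeries_scal, ind_ps, PSeries_mult by auto.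
    unfold Rf, p, p1. ring.
    apply ex_pseries_minus; auto.
    apply ex_pseries_plus; auto. apply ex_pseries_minus; auto.
  - eapply ex_pseries_ext. intro n. symmetry. apply Ext. auto.
Qed.

Lemma PSeries_nonpos (a : nat -> R) x :
  (forall n, a n <= 0) -> 0 <= x -> ex_pseries a x -> PSeries a x <= 0.
Proof.
  intros Ha Hx He.
  assert (0 <= PSeries (PS_scal (-1) a) x).
  { apply PSeries_nonneg; auto. intro n. unfold PS_scal, scal; simpl. unfold mult; simpl.
    specialize (Ha n). lra. apply ex_pseries_scal. apply Rmult_comm. auto. }
  rewrite PSeries_scal in H. lra.
Qed.

Section Main.
Variable tau j : R.
Hypothesis Htau : -1 < tau.
Hypothesis Hj : 0 < j.
Hypothesis Hfirst : forall r, 0 < r < j -> BesselJ tau r <> 0.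

Let T := j ^ 2.
Lemma HT : 0 < T. Proof. unfold T. nra. Qed.
Lemma Hf : forall t, 0 <= t < T -> 0 < f tau t.
Proof. apply f_pos; auto. Qed.

Definition cN (N n : nat) : R := if (n <=? N)%nat then c tau n else 0.

Lemma cN_fin N : forall k, (N < k)%nat -> cN N k = 0.
Proof. intros k Hk. unfold cN. destruct (Nat.leb_spec k N). lia. auto. Qed.

Lemma cN_nonneg N n : 0 <= cN N n.
Proof. unfold cN. destruct (n <=? N)%nat. apply c_nonneg; auto. lra. Qed.

Lemma cN_rc N n : rc tau (cN N) n <= 0.
Proof.
  unfold rc. destruct (le_lt_dec n N).
  - assert (PS_mult (cN N) (cN N) n = PS_mult (c tau) (c tau) n).
    { unfold PS_mult. apply sum_eq. intros i Hi. unfold cN.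
      rewrite (proj2 (Nat.leb_le i N)) by lia. rewrite (proj2 (Nat.leb_le (n - i) N)) by lia. auto. }
    rewrite H. unfold cN at 1. rewrite (proj2 (Nat.leb_le n N)) by lia.
    rewrite c_rec by auto. unfold ind. lra.
  - rewrite cN_fin by auto.
    assert (0 <= PS_mult (cN N) (cN N) n).
    { unfold PS_mult. apply cond_pos_sum. intro; apply Rmult_le_pos; apply cN_nonneg. }
    assert (0 <= ind n) by (unfold ind; destruct (n =? 1)%nat; lra). lra.
Qed.

Definition z t := - t * f1 tau t / f tau t.

Lemma partial_le N t : 0 < t < T -> sum_f_R0 (fun k => c tau k * t ^ k) N <= z t.
Proof.
  intro Ht.
  assert (Hrad : forall x, Rbar_lt (Rabs x) (CV_radius (cN N))) by (apply fin_radius with N; apply cN_fin).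
  assert (HP := Q_sign tau T Htau HT Hf (cN N) eq_refl (cN_nonneg N) (fun x _ => Hrad x) 1 (or_introl eq_refl)).
  assert (HP' : 1 * P tau (cN N) t <= 0).
  { apply HP; auto. intros x Hx. destruct (Rf_series tau (cN N) x (Hrad x)) as [E1 E2].
    rewrite E1. rewrite Rmult_1_l. apply PSeries_nonpos; auto. apply cN_rc. lra. }
  unfold P, p in HP'. rewrite (PSeries_fin _ N) in HP' by apply cN_fin.
  rewrite (sum_eq _ (fun k => c tau k * t ^ k)) in HP'.
  pose proof (Hf t ltac:(lra)). unfold z.
  apply Rmult_le_reg_r with (f tau t); auto.
  replace (- t * f1 tau t / f tau t * f tau t) with (- t * f1 tau t) by (field; lra). lra.
  intros i Hi. unfold cN. rewrite (proj2 (Nat.leb_le i N) Hi). auto.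
Qed.

Lemma c_rad t : 0 <= t < T -> Rbar_lt (Rabs t) (CV_radius (c tau)).
Proof.
  intro Ht. set (r := (t + T) / 2).
  assert (Hr : 0 < r < T) by (unfold r; lra). assert (Htr : t < r) by (unfold r; lra).
  assert (Rbar_le r (CV_radius (c tau))).
  { apply radius_of_bound with (z r). intro n.
    rewrite Rabs_pos_eq. 2: { apply Rmult_le_pos. apply c_nonneg; auto. apply pow_le; lra. }
    apply Rle_trans with (sum_f_R0 (fun k => c tau k * r ^ k) n).
    apply (sum_term_le (fun k => c tau k * r ^ k)). intro k. apply Rmult_le_pos. apply c_nonneg; auto. apply pow_le; lra. lia.
    apply partial_le; auto. }
  rewrite Rabs_pos_eq by lra.
  destruct (CV_radius (c tau)) as [R0| |]; simpl in *; auto. lra.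
Qed.

Lemma S_eq t : 0 < t < T -> PSeries (c tau) t = z t.
Proof.
  intro Ht.
  assert (Hrad : forall x, 0 <= x < T -> Rbar_lt (Rabs x) (CV_radius (c tau))) by apply c_rad.
  assert (HR0 : forall x, 0 < x < T -> Rf tau (c tau) x = 0).
  { intros x Hx. destruct (Rf_series tau (c tau) x (Hrad x ltac:(lra))) as [E1 _].
    rewrite E1, <- (PSeries_const_0 x). apply PSeries_ext. intro n. unfold rc.
    rewrite c_rec by auto. unfold ind. ring. }
  assert (H1 := Q_sign tau T Htau HT Hf (c tau) (c0 tau) (c_nonneg tau Htau) Hrad 1 (or_introl eq_refl)).
  assert (H2 := Q_sign tau T Htau HT Hf (c tau) (c0 tau) (c_nonneg tau Htau) Hrad (-1) (or_intror eq_refl)).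
  assert (P tau (c tau) t = 0).
  { assert (1 * P tau (c tau) t <= 0). apply H1; auto. intros x Hx; rewrite HR0; lra.
    assert (-1 * P tau (c tau) t <= 0). apply H2; auto. intros x Hx; rewrite HR0; lra. lra. }
  unfold P, p in H. pose proof (Hf t ltac:(lra)). unfold z.
  apply Rmult_eq_reg_r with (f tau t). 2: lra.
  replace (- t * f1 tau t / f tau t * f tau t) with (- t * f1 tau t) by (field; lra). lra.
Qed.

End Main.

Section Fin.
Variable tau j : R.
Hypothesis Htau : -1 < tau.
Hypothesis Hj : 0 < j.
Hypothesis Hfirst : forall r, 0 < r < j -> BesselJ tau r <> 0.

Definition S t := PSeries (c tau) t.
Definition S1 t := PSeries (PS_derive (c tau)) t.
Definition S2 t := PSeries (PS_derive (PS_derive (c tau))) t.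

Lemma rad1 t : 0 <= t < j ^ 2 -> Rbar_lt (Rabs t) (CV_radius (PS_derive (c tau))).
Proof. intro H. rewrite CV_radius_derive. apply c_rad with j; auto. Qed.
Lemma rad2 t : 0 <= t < j ^ 2 -> Rbar_lt (Rabs t) (CV_radius (PS_derive (PS_derive (c tau)))).
Proof. intro H. rewrite !CV_radius_derive. apply c_rad with j; auto. Qed.

Lemma hu_S y : 0 < y < j -> h_u tau y = 2 * S (y ^ 2).
Proof.
  intro Hy. assert (Hy2 : 0 < y ^ 2 < j ^ 2) by (split; nra).
  pose proof (Hf tau j Htau Hj Hfirst (y ^ 2) ltac:(lra)).
  rewrite h_u_eq by (auto; lra). unfold S. rewrite S_eq with (j := j) by auto.
  unfold z. field. lra.
Qed.

Lemma S2_pos t : 0 <= t < j ^ 2 -> 0 < S2 t.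
Proof.
  intro Ht. unfold S2.
  rewrite PSeries_decr_1 by (apply CV_radius_inside, rad2; auto).
  assert (0 <= PSeries (PS_decr_1 (PS_derive (PS_derive (c tau)))) t).
  { apply PSeries_nonneg. intro n. unfold PS_decr_1, PS_derive.
    apply Rmult_le_pos. apply pos_INR. apply Rmult_le_pos. apply pos_INR. apply c_nonneg; auto. lra.
    apply CV_radius_inside. rewrite CV_radius_decr_1. apply rad2; auto. }
  replace (PS_derive (PS_derive (c tau)) 0%nat) with (2 * c tau 2) by (unfold PS_derive; simpl; ring). pose proof (c2_pos tau Htau). nra.
Qed.

Lemma S1_incr s t : 0 <= s -> s < t -> t < j ^ 2 -> S1 s < S1 t.
Proof.
  intros H1 H2 H3.
  destruct (MVT_gen S1 s t S2) as [xi [Hxi Heq]].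
  { intros x Hx. rewrite Rmin_left, Rmax_right in Hx by lra. apply is_derive_PSeries, rad1. lra. }
  { intros x Hx. rewrite Rmin_left, Rmax_right in Hx by lra. apply PSeries_continuity, rad1. lra. }
  rewrite Rmin_left, Rmax_right in Hxi by lra.
  pose proof (S2_pos xi ltac:(lra)). nra.
Qed.

Lemma hu_der r : 0 < r < j -> is_derive (h_u tau) r (4 * r * S1 (r ^ 2)).
Proof.
  intro Hr.
  assert (Hr2 : 0 < r ^ 2 < j ^ 2) by (split; nra).
  assert (H1 : is_derive S (r ^ 2) (S1 (r ^ 2))).
  { apply is_derive_PSeries. apply c_rad with j; auto. lra. }
  assert (H2 : is_derive (fun y : R => y ^ 2) r (2 * r)).
  { apply is_derive_Reals. replace (2 * r) with (INR 2 * r ^ Nat.pred 2) by (simpl; ring).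
    apply derivable_pt_lim_pow. }
  assert (H3 : is_derive (fun y => 2 * S (y ^ 2)) r (4 * r * S1 (r ^ 2))).
  { apply is_derive_Reals.
    replace (4 * r * S1 (r ^ 2)) with (2 * (S1 (r ^ 2) * (2 * r))) by ring.
    apply (derivable_pt_lim_scal (fun y => S (y ^ 2))).
    apply (derivable_pt_lim_comp (fun y => y ^ 2) S). apply is_derive_Reals; auto.
    apply is_derive_Reals; auto. }
  eapply is_derive_ext_loc. 2: exact H3.
  assert (Heps : 0 < Rmin r (j - r)) by (apply Rmin_case; lra).
  exists (mkposreal _ Heps). intros y Hy.
  change (Rabs (y - r) < Rmin r (j - r)) in Hy.
  pose proof (Rmin_l r (j - r)). pose proof (Rmin_r r (j - r)).
  apply Rabs_def2 in Hy. symmetry. apply hu_S. lra.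
Qed.

End Fin.

Theorem propositionA2 (tau j : R) (Htau : -1 < tau)
  (Hj : 0 < j) (Hzero : BesselJ tau j = 0)
  (Hfirst : forall r, 0 < r < j -> BesselJ tau r <> 0) :
  (forall r, 0 < r < j -> exists l, derivable_pt_lim (h_u tau) r l) /\
  (forall d : R -> R,
     (forall r, 0 < r < j -> derivable_pt_lim (h_u tau) r (d r)) ->
     forall r s, 0 < r -> r < s -> s < j -> d r / r < d s / s).
Proof.
  split.
  - intros r Hr. exists (4 * r * S1 tau (r ^ 2)). apply is_derive_Reals. apply hu_der with j; auto.
  - intros d Hd r s Hr Hrs Hs.
    assert (Er : d r = 4 * r * S1 tau (r ^ 2)).
    { apply uniqueness_limite with (h_u tau) r. apply Hd; lra. apply is_derive_Reals. apply hu_der with j; auto; lra. }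
    assert (Es : d s = 4 * s * S1 tau (s ^ 2)).
    { apply uniqueness_limite with (h_u tau) s. apply Hd; lra. apply is_derive_Reals. apply hu_der with j; auto; lra. }
    rewrite Er, Es.
    replace (4 * r * S1 tau (r ^ 2) / r) with (4 * S1 tau (r ^ 2)) by (field; lra).
    replace (4 * s * S1 tau (s ^ 2) / s) with (4 * S1 tau (s ^ 2)) by (field; lra).
    assert (S1 tau (r ^ 2) < S1 tau (s ^ 2)).
    { apply S1_incr with j; auto; nra. }
    lra.
Qed.
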